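(* Let $R$ be a ring. Then $R$ is feckly clean if and only if for any two distinct maximal ideals $M$ and $N$ of $R$ there exists $e\in R$ such that $e\in M$, $1-e\in N$ and $eR(1-e)\subseteq J(R)$.
   Context: Rings are associative with identity, not necessarily commutative; $J(R)$ is the Jacobson radical; maximal ideals are two-sided. An element $u\in R$ is full if $RuR=R$. An element $a\in R$ is feckly clean if there exist $e\in R$ and a full element $u\in R$ with $a=e+u$ and $eR(1-e)\subseteq J(R)$; $R$ is feckly clean if every element is feckly clean. *)

(* Defs.v *)
From HB Require Import structures.
From mathcomp Require Import all_boot all_order all_algebra.
Set Implicit Arguments. Unset Strict Implicit. Unset Printing Implicit Defensive.
Import GRing.Theory.
Local Open Scope ring_scope.

Definition left_ideal (R : pzRingType) (I : R -> Prop) : Prop :=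
  I 0 /\ (forall x y, I x -> I y -> I (x + y)) /\ (forall x, I x -> I (- x)) /\
  (forall r x, I x -> I (r * x)).

Definition ideal (R : pzRingType) (I : R -> Prop) : Prop :=
  left_ideal I /\ (forall x r, I x -> I (x * r)).

Definition proper (R : pzRingType) (I : R -> Prop) : Prop := exists x, ~ I x.

Definition maximal_left_ideal (R : pzRingType) (M : R -> Prop) : Prop :=
  left_ideal M /\ proper M /\
  forall I : R -> Prop, left_ideal I -> proper I -> (forall x, M x -> I x) ->
    forall x, I x -> M x.

Definition maximal_ideal (R : pzRingType) (M : R -> Prop) : Prop :=
  ideal M /\ proper M /\
  forall I : R -> Prop, ideal I -> proper I -> (forall x, M x -> I x) ->
    forall x, I x -> M x.

Definition jacobson (R : pzRingType) (x : R) : Prop :=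
  forall M : R -> Prop, maximal_left_ideal M -> M x.

(* RuR : the two-sided ideal generated by u (finite sums of a u b). *)
Definition RuR (R : pzRingType) (u x : R) : Prop :=
  exists s : seq (R * R), x = \sum_(p <- s) (p.1 * u * p.2).

Definition full (R : pzRingType) (u : R) : Prop := forall x : R, RuR u x.

Definition eR1e_in_J (R : pzRingType) (e : R) : Prop :=
  forall r : R, jacobson (e * r * (1 - e)).

Definition feckly_clean_elt (R : pzRingType) (a : R) : Prop :=
  exists e u : R, a = e + u /\ full u /\ eR1e_in_J e.

Definition feckly_clean (R : pzRingType) : Prop :=
  forall a : R, feckly_clean_elt a.

(* Main.v *)
Require Import Defs.
From HB Require Import structures.
From mathcomp Require Import all_boot all_order all_algebra.
From mathcomp Require classical_sets boolp.
From Stdlib Require Import Classical.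
Import GRing.Theory.
Local Open Scope ring_scope.
Set Implicit Arguments. Unset Strict Implicit.

Lemma zorn_wrap (T : Type) (P : (T -> Prop) -> Prop) (M : T -> Prop) (x0 : T) :
  M x0 -> P M ->
  (forall F : (T -> Prop) -> Prop, (exists X, F X) -> (forall X, F X -> P X) ->
     (forall X Y, F X -> F Y -> (forall t, X t -> Y t) \/ (forall t, Y t -> X t)) ->
     P (fun t => exists2 X, F X & X t)) ->
  exists A, P A /\ (forall t, M t -> A t) /\
    (forall B, P B -> (forall t, A t -> B t) -> forall t, B t -> A t).
Proof.
move=> Mx0 PM Hch.
pose Q (X : T -> Prop) := (forall t, ~ X t) \/ (P X /\ forall t, M t -> X t).
case: (@classical_sets.Zorn_bigcup T Q) => [F FQ Ftot|A [QA Amax]].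
  case: (classic (exists X, F X /\ exists t, X t)) => [[X [FX [t Xt]]]|Hno]; last first.
    rewrite /Q; left=> t [X FX Xt]; apply: Hno; exists X; split => //; by exists t.
  rewrite /Q; right.
  pose F' X := F X /\ exists t, X t.
  have PF' : forall X, F' X -> P X /\ forall t, M t -> X t.
    move=> Y [FY [t1 Yt]]; case: (FQ Y FY) => // Hn; by case: (Hn t1).
  have E : (fun t => exists2 X, F' X & X t) = classical_sets.bigcup F id.
    apply: boolp.funext => t2; apply: boolp.propext; split.
      by move=> [Y [FY _] Yt]; exists Y.
    by move=> [Y FY Yt]; exists Y => //; split => //; exists t2.
  split.
    rewrite -E; apply: Hch.
    - by exists X; split => //; exists t.
    - by move=> Y /PF' [].
    - move=> Y Z [FY _] [FZ _]; exact: Ftot.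
  move=> s Ms; exists X => //; by case: (PF' X (conj FX (ex_intro _ t Xt))) => _ /(_ s Ms).
have [HA MA] : P A /\ forall t, M t -> A t.
  case: QA => // Hn; exfalso; apply: (Amax M); last by right; split.
  split; first by move=> t /Hn.
  by move=> /(_ x0 Mx0) /Hn.
exists A; split => //; split => //.
move=> B PB AB t Bt; apply: NNPP => nAt; apply: (Amax B).
  by split => // /(_ t Bt).
by right; split => // s /MA /AB.
Qed.

Section S.
Variable R : pzRingType.
Implicit Types (x y z r s a b c e f u : R) (I L M N P : R -> Prop).

Lemma li0 I : left_ideal I -> I 0. Proof. by case. Qed.
Lemma liD I x y : left_ideal I -> I x -> I y -> I (x + y). Proof. by move=> [_ [H _]]; apply: H. Qed.
Lemma liN I x : left_ideal I -> I x -> I (- x). Proof. by move=> [_ [_ [H _]]]; apply: H. Qed.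
Lemma liM I r x : left_ideal I -> I x -> I (r * x). Proof. by move=> [_ [_ [_ H]]]; apply: H. Qed.
Lemma liB I x y : left_ideal I -> I x -> I y -> I (x - y).
Proof. by move=> H Hx Hy; apply: liD => //; apply: liN. Qed.
Lemma idMr I x r : ideal I -> I x -> I (x * r). Proof. by move=> [_ H]; apply: H. Qed.

Lemma li_all I : left_ideal I -> I 1 -> forall x, I x.
Proof. by move=> Hl I1 x; rewrite -[x]mulr1; apply: liM. Qed.

Lemma ideal_not1 I : left_ideal I -> Defs.proper I -> ~ I 1.
Proof. by move=> Hl [x nx] /(li_all Hl) /(_ x). Qed.

Lemma zorn_left I : left_ideal I -> ~ I 1 ->
  exists L, maximal_left_ideal L /\ forall x, I x -> L x.
Proof.
move=> HI n1.
case: (@zorn_wrap R (fun X => left_ideal X /\ ~ X 1) I 0 (li0 HI) (conj HI n1)) => [F [X0 FX0] FP Ftot|A [[HA nA1] [IA Amax]]].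
  split; last by move=> [X FX X1]; case: (FP X FX).
  split; first by exists X0 => //; case: (FP X0 FX0) => [[]].
  split.
    move=> x y [X FX Xx] [Y FY Yy]; case: (Ftot X Y FX FY) => sub.
      by exists Y => //; apply: liD (FP Y FY).1 _ _ => //; apply: sub.
    by exists X => //; apply: liD (FP X FX).1 _ _ => //; apply: sub.
  split; first by move=> x [X FX Xx]; exists X => //; exact: liN (FP X FX).1 Xx.
  by move=> r x [X FX Xx]; exists X => //; exact: liM (FP X FX).1 Xx.
exists A; split => //; split => //; split; first by exists 1.
by move=> I' HI' pr' sub x I'x; apply: (Amax I') => //; split => //; apply: ideal_not1.
Qed.

Lemma zorn_ideal I : ideal I -> ~ I 1 ->
  exists M, maximal_ideal M /\ forall x, I x -> M x.
Proof.
move=> HI n1.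
case: (@zorn_wrap R (fun X => ideal X /\ ~ X 1) I 0 (li0 HI.1) (conj HI n1)) => [F [X0 FX0] FP Ftot|A [[HA nA1] [IA Amax]]].
  split; last by move=> [X FX X1]; case: (FP X FX).
  split; last by move=> x r [X FX Xx]; exists X => //; exact: idMr (FP X FX).1 Xx.
  split; first by exists X0 => //; case: (FP X0 FX0) => [[[]]].
  split.
    move=> x y [X FX Xx] [Y FY Yy]; case: (Ftot X Y FX FY) => sub.
      by exists Y => //; apply: liD (FP Y FY).1.1 _ _ => //; apply: sub.
    by exists X => //; apply: liD (FP X FX).1.1 _ _ => //; apply: sub.
  split; first by move=> x [X FX Xx]; exists X => //; exact: liN (FP X FX).1.1 Xx.
  by move=> r x [X FX Xx]; exists X => //; exact: liM (FP X FX).1.1 Xx.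
exists A; split => //; split => //; split; first by exists 1.
by move=> I' HI' pr' sub x I'x; apply: (Amax I') => //; split => //; apply: ideal_not1 HI'.1 pr'.
Qed.


Inductive gen (C : R -> Prop) : R -> Prop :=
| gen0 : gen C 0
| genS a c b z : C c -> gen C z -> gen C (a * c * b + z).

Lemma gen_ideal (C : R -> Prop) : ideal (gen C).
Proof.
split; last first.
  move=> x r; elim=> [|a c b z Cc _ IH]; first by rewrite mul0r; constructor.
  by rewrite mulrDl -!mulrA; rewrite !mulrA -(mulrA _ b r); apply: genS.
split; first by constructor.
split.
  move=> x y; elim=> [|a c b z Cc _ IH] Gy; first by rewrite add0r.
  by rewrite -addrA; apply: genS => //; apply: IH.
split.
  move=> x; elim=> [|a c b z Cc _ IH]; first by rewrite oppr0; constructor.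
  by rewrite opprD -!mulNr; apply: genS.
move=> r x; elim=> [|a c b z Cc _ IH]; first by rewrite mulr0; constructor.
by rewrite mulrDr !mulrA; apply: genS.
Qed.

Lemma gen_in (C : R -> Prop) c : C c -> gen C c.
Proof. by move=> Cc; have := genS 1 1 Cc (gen0 C); rewrite mul1r mulr1 addr0. Qed.

Lemma maxL_ext L y : maximal_left_ideal L ->
  L y \/ exists l s, L l /\ 1 = l + s * y.
Proof.
move=> [HL [prL maxL]].
pose K t := exists l s, L l /\ t = l + s * y.
case: (classic (K 1)) => [K1|nK1]; first by right.
left; apply: (maxL K); last by exists 0, 1; rewrite mul1r add0r; split => //; apply: li0.
- split; first by exists 0, 0; rewrite mul0r addr0; split => //; apply: li0.
  split.
    move=> _ _ [l [s [Ll ->]]] [l' [s' [Ll' ->]]]; exists (l + l'), (s + s').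
    by split; [apply: liD | rewrite mulrDl addrACA].
  split.
    move=> _ [l [s [Ll ->]]]; exists (- l), (- s).
    by split; [apply: liN | rewrite opprD mulNr].
  move=> r _ [l [s [Ll ->]]]; exists (r * l), (r * s).
  by split; [apply: liM | rewrite mulrDr mulrA].
- by exists 1.
- by move=> x Lx; exists x, 0; rewrite mul0r addr0.
Qed.

Lemma maxI_ext M y : maximal_ideal M ->
  M y \/ gen (fun z => M z \/ z = y) 1.
Proof.
move=> [HM [prM maxM]].
case: (classic (gen (fun z => M z \/ z = y) 1)) => [K1|nK1]; first by right.
left; apply: (maxM _ (gen_ideal (fun z => M z \/ z = y))); last by apply: gen_in => /=; right.
- by exists 1.
- by move=> x Mx; apply: gen_in => /=; left.
Qed.

Lemma J0 : jacobson (0 : R). Proof. by move=> L [HL _]; apply: li0. Qed.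
Lemma JD x y : jacobson x -> jacobson y -> jacobson (x + y).
Proof. by move=> Jx Jy L HL; apply: liD HL.1 (Jx L HL) (Jy L HL). Qed.
Lemma JN x : jacobson x -> jacobson (- x).
Proof. by move=> Jx L HL; apply: liN HL.1 (Jx L HL). Qed.
Lemma JM r x : jacobson x -> jacobson (r * x).
Proof. by move=> Jx L HL; apply: liM HL.1 (Jx L HL). Qed.

Lemma JMr x r : jacobson x -> jacobson (x * r).
Proof.
move=> Jx L HL; have [HLl [Lpr Lmax]] := HL.
case: (classic (L r)) => Lr; first exact: liM.
pose L' s := L (s * r).
have HL'l : left_ideal L'.
  split; first by rewrite /L' mul0r; apply: li0.
  split; first by move=> a b; rewrite /L' mulrDl; apply: liD.
  split; first by move=> a; rewrite /L' mulNr; apply: liN.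
  by move=> t a; rewrite /L' -mulrA; apply: liM.
apply: (Jx L'); split => //; split; first by exists 1; rewrite /L' mul1r.
move=> I HI Ipr L'I z Iz.
pose K t := exists s l, I s /\ L l /\ t = s * r + l.
case: (classic (K 1)) => [[s [l [Is [Ll E1]]]]|nK1].
  exfalso; apply: (ideal_not1 HI Ipr); apply: li_all => //.
  have Iw : forall w, I w.
    move=> w; have -> : w = (w - w * r * s) + w * r * s by rewrite subrK.
    apply: liD => //; last by apply: liM.
    apply: L'I; rewrite /L' mulrBl -(mulrA _ s r).
    have -> : s * r = 1 - l by rewrite E1 addrK.
    by rewrite mulrBr mulr1 opprB addrC subrK; apply: liM.
  exact: Iw.
have HK : left_ideal K.
  split; first by exists 0, 0; rewrite mul0r addr0; split; [apply: li0|split=> //; apply: li0].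
  split.
    move=> _ _ [s [l [Is [Ll ->]]]] [s' [l' [Is' [Ll' ->]]]]; exists (s + s'), (l + l').
    by split; [apply: liD|split; [apply: liD|rewrite mulrDl addrACA]].
  split.
    move=> _ [s [l [Is [Ll ->]]]]; exists (- s), (- l).
    by split; [apply: liN|split; [apply: liN|rewrite opprD mulNr]].
  move=> t _ [s [l [Is [Ll ->]]]]; exists (t * s), (t * l).
  by split; [apply: liM|split; [apply: liM|rewrite mulrDr mulrA]].
have KL := Lmax K HK (ex_intro _ 1 nK1).
rewrite /L'; apply: KL; last by exists z, 0; rewrite addr0; split => //; split => //; apply: li0.
by move=> q Lq; exists 0, q; rewrite mul0r add0r; split => //; apply: li0.
Qed.

Lemma Jsemi y : (forall s, jacobson (y * s * y)) -> jacobson y.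
Proof.
move=> H L HL; case: (maxL_ext y HL) => [//|[l [s [Ll E1]]]].
have -> : y = y * l + y * s * y by rewrite -mulrA -mulrDr -E1 mulr1.
by apply: liD HL.1 _ _; [apply: liM HL.1 Ll|apply: H s L HL].
Qed.

Lemma J_sub M x : maximal_ideal M -> jacobson x -> M x.
Proof.
move=> HM Jx; case: (maxI_ext x HM) => [//|G1].
have [HMi [prM _]] := HM.
have : forall z, gen (fun z => M z \/ z = x) z -> exists m j, M m /\ jacobson j /\ z = m + j.
  move=> z; elim=> [|a c b w [Mc|->] _ [m [j [Mm [Jj ->]]]]].
  - by exists 0, 0; rewrite addr0; split; [apply: li0 HMi.1|split => //; apply: J0].
  - exists (a * c * b + m), j; rewrite addrA; split => //.
    by apply: liD HMi.1 _ Mm; apply: idMr => //; apply: liM HMi.1 _.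
  - exists m, (a * x * b + j); rewrite addrCA; split => //; split => //.
    by apply: JD => //; apply: JMr; apply: JM.
move=> /(_ 1 G1) [m [j [Mm [Jj E1]]]].
have [L [HL ML]] := zorn_left HMi.1 (ideal_not1 HMi.1 prM).
exfalso; apply: (ideal_not1 HL.1 HL.2.1); rewrite E1; apply: liD HL.1 _ _; first exact: ML.
exact: Jj.
Qed.

Lemma primeM M x y : maximal_ideal M -> (forall r, M (x * r * y)) -> M x \/ M y.
Proof.
move=> HM H; case: (maxI_ext y HM) => [|G1]; first by right.
left; have [HMi _] := HM; rewrite -[x]mulr1.
elim: G1 => [|a c b w [Mc|->] _ IH]; first by rewrite mulr0; apply: li0 HMi.1.
  rewrite mulrDr; apply: liD HMi.1 _ IH; rewrite !mulrA; apply: idMr => //.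
  by rewrite -mulrA; apply: liM HMi.1 _; apply: liM HMi.1 _.
by rewrite mulrDr; apply: liD HMi.1 _ IH; rewrite !mulrA; apply: idMr.
Qed.

Lemma dich M e : maximal_ideal M -> eR1e_in_J e -> M e \/ M (1 - e).
Proof. by move=> HM He; apply: primeM => // r; apply: J_sub. Qed.

Lemma E_mul e f : eR1e_in_J e -> eR1e_in_J f -> eR1e_in_J (e * f).
Proof.
move=> He Hf r.
have -> : 1 - e * f = (1 - e) + e * (1 - f) by rewrite mulrBr mulr1 addrA subrK.
have -> : e * f * r * ((1 - e) + e * (1 - f)) = e * (f * r) * (1 - e) + e * (f * (r * e) * (1 - f)).
  by rewrite mulrDr !mulrA.
by apply: JD; [apply: He|apply: JM; apply: Hf].
Qed.

Lemma E_compl e : eR1e_in_J e -> eR1e_in_J (1 - e).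
Proof.
move=> He r; rewrite subKr; apply: Jsemi => s.
have -> : (1 - e) * r * e * s * ((1 - e) * r * e) = ((1 - e) * r) * (e * s * (1 - e)) * (r * e).
  by rewrite !mulrA.
by apply: JMr; apply: JM; apply: He.
Qed.

Lemma E0 : eR1e_in_J (0 : R). Proof. by move=> r; rewrite !mul0r; apply: J0. Qed.
Lemma E1 : eR1e_in_J (1 : R). Proof. by move=> r; rewrite subrr mulr0; apply: J0. Qed.

Lemma full_all u M : full u -> ideal M -> M u -> forall x, M x.
Proof.
move=> Fu HM Mu x; have [s ->] := Fu x.
apply: (big_ind (fun t => M t)); first by apply: li0 HM.1.
  by move=> ? ?; apply: liD HM.1.
by move=> p _; apply: idMr => //; apply: liM HM.1 _.
Qed.

Lemma gen_RuR u x : gen (fun z => z = u) x -> RuR u x.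
Proof.
elim=> [|a c b z -> _ [s ->]]; first by exists [::]; rewrite big_nil.
by exists ((a, b) :: s); rewrite big_cons.
Qed.

End S.

Lemma A1 (R : pzRingType) (p q : R) : p + q - p = q.
Proof. by rewrite addrC addKr. Qed.

Theorem theorem2p6 (R : pzRingType) :
  feckly_clean R <->
  (forall M N : R -> Prop, maximal_ideal M -> maximal_ideal N -> ~ (forall x, M x <-> N x) ->
     exists e : R, M e /\ N (1 - e) /\ eR1e_in_J e).
Proof.
split.
- move=> fc M N HM HN neq.
  have [HMi [prM maxM]] := HM; have [HNi [prN maxN]] := HN.
  have [m [n [Mm [Nn E1']]]] : exists m n, M m /\ N n /\ 1 = m + n.
    apply: NNPP => nK.
    pose K t := exists m n, M m /\ N n /\ t = m + n.
    have HK : ideal K.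
      split; last first.
        move=> _ r [m [n [Mm [Nn ->]]]]; exists (m * r), (n * r); rewrite mulrDl.
        by split; [apply: idMr|split; [apply: idMr|]].
      split; first by exists 0, 0; rewrite addr0; split; [apply: li0 HMi.1|split => //; apply: li0 HNi.1].
      split.
        move=> _ _ [m [n [Mm [Nn ->]]]] [m' [n' [Mm' [Nn' ->]]]]; exists (m + m'), (n + n').
        by split; [apply: liD HMi.1 _ _|split; [apply: liD HNi.1 _ _|rewrite addrACA]].
      split.
        move=> _ [m [n [Mm [Nn ->]]]]; exists (- m), (- n).
        by split; [apply: liN HMi.1 _|split; [apply: liN HNi.1 _|rewrite opprD]].
      move=> r _ [m [n [Mm [Nn ->]]]]; exists (r * m), (r * n).
      by split; [apply: liM HMi.1 _|split; [apply: liM HNi.1 _|rewrite mulrDr]].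
    have prK : Defs.proper K by exists 1 => [[m [n [Mm [Nn E]]]]]; apply: nK; exists m, n.
    have KM : forall t, K t -> M t.
      apply: (maxM K HK prK) => t Mt; exists t, 0; rewrite addr0; split => //; split => //.
      exact: li0 HNi.1.
    have NM : forall t, N t -> M t.
      by move=> t Nt; apply: KM; exists 0, t; rewrite add0r; split => //; apply: li0 HMi.1.
    apply: neq => t; split; last exact: NM.
    exact: (maxN M HMi prM NM).
  have [e [u [En [Fu He]]]] := fc n.
  exists e; split.
    case: (dich HM He) => // M1e; exfalso.
    apply: (ideal_not1 HMi.1 prM); apply: (full_all Fu HMi).
    have -> : u = (1 - e) - m by rewrite E1' En addrCA A1 A1.
    by apply: liB HMi.1 _ _.
  split => //.
  case: (dich HN He) => // Ne; exfalso.
  apply: (ideal_not1 HNi.1 prN); apply: (full_all Fu HNi).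
  have -> : u = n - e by rewrite En A1.
  by apply: liB HNi.1 _ _.
- move=> H a.
  have step1 : forall N, maximal_ideal N -> N (1 - a) ->
      exists h, eR1e_in_J h /\ N h /\ (forall P, maximal_ideal P -> P a -> P (1 - h)).
    move=> N HN Na.
    pose C c := c = a \/ (eR1e_in_J c /\ N c).
    have G1 : gen C 1.
      apply: NNPP => nG.
      have [P [HP GP]] := zorn_ideal (gen_ideal C) nG.
      have Pa : P a by apply: GP; apply: gen_in; left.
      have neq : ~ (forall x, N x <-> P x).
        move=> eqNP; apply: (ideal_not1 HP.1.1 HP.2.1).
        rewrite -(subrK a 1); apply: liD HP.1.1 _ Pa; exact/eqNP.
      have [c [Nc [P1c Ec]]] := H N P HN HP neq.
      apply: (ideal_not1 HP.1.1 HP.2.1).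
      rewrite -(subrK c 1); apply: liD HP.1.1 P1c _; apply: GP; apply: gen_in; right.
      by split.
    have : forall z, gen C z -> exists h, eR1e_in_J h /\ N h /\
         (forall P, maximal_ideal P -> P a -> P h -> P z).
      move=> z; elim=> [|al g be w [->|[Eg Ng]] _ [h [Eh [Nh Hh]]]].
      - exists 0; split; first exact: E0. split; first exact: li0 HN.1.1.
        by move=> P HP _ _; apply: li0 HP.1.1.
      - exists h; split => //; split => // P HP Pa Ph; apply: liD HP.1.1 _ (Hh P HP Pa Ph).
        by apply: idMr HP.1 _; apply: liM HP.1.1 Pa.
      - have Eq : 1 - (1 - g) * (1 - h) = g + (1 - g) * h.
          by rewrite mulrBr mulr1 opprB addrCA subKr addrC.
        exists (1 - (1 - g) * (1 - h)); split.
          by apply: E_compl; apply: E_mul; apply: E_compl.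
        split; first by rewrite Eq; apply: liD HN.1.1 Ng _; apply: liM HN.1.1 Nh.
        move=> P HP Pa Ph.
        have Pg : P g.
          case: (dich HP Eg) => // P1g; exfalso; apply: (ideal_not1 HP.1.1 HP.2.1).
          rewrite -(subrK ((1 - g) * (1 - h)) 1); apply: liD HP.1.1 Ph _.
          exact: idMr HP.1 P1g.
        have Ph' : P h.
          have P1gh : P ((1 - g) * h).
            by rewrite -(A1 g ((1 - g) * h)) -Eq; apply: liB HP.1.1 Ph Pg.
          have -> : h = (1 - g) * h + g * h by rewrite mulrBl mul1r subrK.
          by apply: liD HP.1.1 P1gh _; apply: idMr HP.1 Pg.
        apply: liD HP.1.1 _ (Hh P HP Pa Ph').
        by apply: idMr HP.1 _; apply: liM HP.1.1 Pg.
    move=> /(_ 1 G1) [h [Eh [Nh Hh]]]; exists h; split => //; split => //.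
    move=> P HP Pa; case: (dich HP Eh) => // Ph; exfalso.
    exact: (ideal_not1 HP.1.1 HP.2.1 (Hh P HP Pa Ph)).
  pose D c := c = 1 - a \/ exists h, c = 1 - h /\ eR1e_in_J h /\
     (forall P, maximal_ideal P -> P a -> P (1 - h)).
  have G1 : gen D 1.
    apply: NNPP => nG; have [P [HP GP]] := zorn_ideal (gen_ideal D) nG.
    have P1a : P (1 - a) by apply: GP; apply: gen_in; left.
    have [h [Eh [Ph Hh]]] := step1 P HP P1a.
    have P1h : P (1 - h) by apply: GP; apply: gen_in; right; exists h.
    by apply: (ideal_not1 HP.1.1 HP.2.1); rewrite -(subrK h 1); apply: liD HP.1.1 P1h Ph.
  have : forall z, gen D z -> exists e, eR1e_in_J e /\
      (forall P, maximal_ideal P -> P a -> P (1 - e)) /\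
      (forall P, maximal_ideal P -> P (1 - a) -> ~ P e -> P z).
    move=> z; elim=> [|al g be w [->|[h [-> [Eh Hh]]]] _ [e [Ee [He1 He2]]]].
    - exists 1; split; first exact: E1.
      split; move=> P HP _; first by rewrite subrr; apply: li0 HP.1.1.
      by move=> _; apply: li0 HP.1.1.
    - exists e; split => //; split => // P HP Pa nPe; apply: liD HP.1.1 _ (He2 P HP Pa nPe).
      by apply: idMr HP.1 _; apply: liM HP.1.1 Pa.
    - exists (h * e); split; first exact: E_mul.
      split.
        move=> P HP Pa; have -> : 1 - h * e = (1 - h) + h * (1 - e) by rewrite mulrBr mulr1 addrA subrK.
        by apply: liD HP.1.1 (Hh P HP Pa) _; apply: liM HP.1.1 (He1 P HP Pa).
      move=> P HP Pa nPhe; apply: liD HP.1.1 _ (He2 P HP Pa _).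
        case: (dich HP Eh) => [Ph|P1h]; first by exfalso; apply: nPhe; apply: idMr HP.1 Ph.
        by apply: idMr HP.1 _; apply: liM HP.1.1 P1h.
      by move=> Pe; apply: nPhe; apply: liM HP.1.1 Pe.
  move=> /(_ 1 G1) [e [Ee [He1 He2]]].
  exists e, (a - e); split; first by rewrite addrC subrK.
  split => //.
  have G3 : gen (fun z => z = a - e) 1.
    apply: NNPP => nG; have [P [HP GP]] := zorn_ideal (gen_ideal _) nG.
    have Pu : P (a - e) by apply: GP; apply: gen_in.
    apply: (ideal_not1 HP.1.1 HP.2.1).
    case: (dich HP Ee) => [Pe|P1e].
      have Pa : P a by rewrite -(subrK e a); apply: liD HP.1.1 Pu Pe.
      by rewrite -(subrK e 1); apply: liD HP.1.1 (He1 P HP Pa) Pe.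
    have P1a : P (1 - a).
      have -> : 1 - a = (1 - e) - (a - e) by rewrite opprB subrKA.
      exact: liB HP.1.1 P1e Pu.
    case: (classic (P e)) => Pe; last exact: He2 P HP P1a Pe.
    by rewrite -(subrK e 1); apply: liD HP.1.1 P1e Pe.
  move=> x; apply: gen_RuR; rewrite -[x]mul1r; exact: idMr (gen_ideal _) G3.
Qed.
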